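(* (Setting as in the context.) It holds that $$\mathcal F_{p+1}\mathcal F_{p+1}^*+\sigma^{-1}\Sigma_{f_{p+1}}+\begin{pmatrix}\widehat{\mathcal T}_{f_p}&0\\0&\mathcal T_{\theta_p}\end{pmatrix}\succ0\iff \mathcal F\mathcal F^*+\sigma^{-1}\Sigma_f+\mathcal T_f\succ0,$$ $$\mathcal G_{q+1}\mathcal G_{q+1}^*+\sigma^{-1}\Sigma_{g_{q+1}}+\begin{pmatrix}\widehat{\mathcal T}_{g_q}&0\\0&\mathcal T_{\varphi_q}\end{pmatrix}\succ0\iff \mathcal G\mathcal G^*+\sigma^{-1}\Sigma_g+\mathcal T_g\succ0.$$
   Context: Let $p,q\ge1$ be integers, $\mathcal U,\mathcal V,\mathcal X,\mathcal Y_i,\mathcal Z_j$ real finite-dimensional Euclidean spaces; $\mathcal F:\mathcal X\to\mathcal U$, $\mathcal G:\mathcal X\to\mathcal V$, $\mathcal A_i:\mathcal X\to\mathcal Y_i$ ($i=1..p$), $\mathcal B_j:\mathcal X\to\mathcal Z_j$ ($j=1..q$) linear; $\sigma>0$; $\mathcal P_i,\mathcal Q_j$ self-adjoint positive semidefinite on $\mathcal Y_i,\mathcal Z_j$; $\Sigma_f,\Sigma_g$ self-adjoint positive semidefinite on $\mathcal U,\mathcal V$ (in the paper, the operators with $\langle\xi-\tilde\xi,u-\tilde u\rangle\ge\|u-\tilde u\|^2_{\Sigma_f}$ for subgradients of closed proper convex $f$, and likewise for $g$). $\mathcal E_{\theta_i}\succ0$ self-adjoint with $\mathcal E_{\theta_i}\succeq\sigma^{-1}\mathcal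 P_i+\mathcal A_i\mathcal A_i^*$, $\mathcal T_{\theta_i}:=\mathcal E_{\theta_i}-\sigma^{-1}\mathcal P_i-\mathcal A_i\mathcal A_i^*$; $\mathcal E_{\varphi_j}\succ0$ self-adjoint with $\mathcal E_{\varphi_j}\succeq\sigma^{-1}\mathcal Q_j+\mathcal B_j\mathcal B_j^*$, $\mathcal T_{\varphi_j}:=\mathcal E_{\varphi_j}-\sigma^{-1}\mathcal Q_j-\mathcal B_j\mathcal B_j^*$. $\mathcal T_f,\mathcal T_g$ self-adjoint positive semidefinite. $\mathcal F_1:=\mathcal F$, $\mathcal F_{i+1}x:=(\mathcal Fx,\mathcal A_1x,\dots,\mathcal A_ix)$; $\widehat{\mathcal T}_{f_1}:=\mathcal T_f+\mathcal F_1\mathcal A_1^*\mathcal E_{\theta_1}^{-1}\mathcal A_1\mathcal F_1^*$, $\widehat{\mathcal T}_{f_i}:=\mathrm{diag}(\widehat{\mathcal T}_{f_{i-1}},\mathcal T_{\theta_{i-1}})+\mathcal F_i\mathcal A_i^*\mathcal E_{\theta_i}^{-1}\mathcal A_i\mathcal F_i^*$ ($i=2..p$); $\Sigma_{f_1}:=\Sigma_f$, $\Sigma_{f_i}:=\mathrm{diag}(\Sigma_{f_{i-1}},\mathcal P_{i-1})$ ($i=2..p+1$). Analogously $\mathcal G_1:=\mathcal G$, $\mathcal G_{j+1}x:=(\mathcal Gx,\mathcal B_1x,\dots,\mathcal B_jx)$; $\widehat{\mathcal T}_{g_1}:=\mathcal T_g+\mathcal G_1\mathcal B_1^*\mathcal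 E_{\varphi_1}^{-1}\mathcal B_1\mathcal G_1^*$, $\widehat{\mathcal T}_{g_j}:=\mathrm{diag}(\widehat{\mathcal T}_{g_{j-1}},\mathcal T_{\varphi_{j-1}})+\mathcal G_j\mathcal B_j^*\mathcal E_{\varphi_j}^{-1}\mathcal B_j\mathcal G_j^*$ ($j=2..q$); $\Sigma_{g_1}:=\Sigma_g$, $\Sigma_{g_j}:=\mathrm{diag}(\Sigma_{g_{j-1}},\mathcal Q_{j-1})$ ($j=2..q+1$). $\succ0$ means positive definite. *)

(* Defs.v *)
From HB Require Import structures.
From mathcomp Require Import all_boot all_order all_algebra.
Set Implicit Arguments. Unset Strict Implicit. Unset Printing Implicit Defensive.
Import Order.TTheory GRing.Theory Num.Theory.
Local Open Scope ring_scope.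

(* Finite-dimensional Euclidean spaces are modelled as column-vector spaces
   'cV[R]_n with the standard inner product; a linear map X -> Y is a matrix
   'M_(dimY, dimX) acting on the left; the adjoint is the transpose. *)

Definition psdmx (R : realFieldType) (n : nat) (M : 'M[R]_n) : Prop :=
  M^T = M /\ forall x : 'cV[R]_n, 0 <= (x^T *m M *m x) 0 0.

Definition pdmx (R : realFieldType) (n : nat) (M : 'M[R]_n) : Prop :=
  M^T = M /\ forall x : 'cV[R]_n, x != 0 -> 0 < (x^T *m M *m x) 0 0.

Section Chain.
Variables (R : realFieldType) (nx nu : nat) (ny : nat -> nat).
Variables (F : 'M[R]_(nu, nx)) (A : forall i, 'M[R]_(ny i, nx)).
Variables (P E : forall i, 'M[R]_(ny i)).
Variables (sigma : R) (Tf Sf : 'M[R]_nu).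

(* 0-based indexing: A i here is the paper's A_{i+1}, etc. *)

Fixpoint chdim (k : nat) : nat :=
  match k with 0 => nu | k'.+1 => chdim k' + ny k' end.

(* chF k = paper's F_{k+1} : x |-> (F x, A_1 x, ..., A_k x) *)
Fixpoint chF (k : nat) : 'M[R]_(chdim k, nx) :=
  match k return 'M[R]_(chdim k, nx) with
  | 0 => F
  | k'.+1 => col_mx (chF k') (A k')
  end.

(* Ttheta i = paper's T_{theta_{i+1}} = E - sigma^{-1} P - A A^* *)
Definition Ttheta (i : nat) : 'M[R]_(ny i) :=
  E i - sigma^-1 *: P i - A i *m (A i)^T.

(* chT k = paper's hat T_{f_{k+1}} *)
Fixpoint chT (k : nat) : 'M[R]_(chdim k) :=
  match k return 'M[R]_(chdim k) with
  | 0 => Tf + chF 0 *m (A 0)^T *m invmx (E 0) *m A 0 *m (chF 0)^T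
  | k'.+1 => block_mx (chT k') 0 0 (Ttheta k')
             + chF k'.+1 *m (A k'.+1)^T *m invmx (E k'.+1) *m A k'.+1
                 *m (chF k'.+1)^T
  end.

(* chSig k = paper's Sigma_{f_{k+1}} = diag(Sigma_f, P_1, ..., P_k) *)
Fixpoint chSig (k : nat) : 'M[R]_(chdim k) :=
  match k return 'M[R]_(chdim k) with
  | 0 => Sf
  | k'.+1 => block_mx (chSig k') 0 0 (P k')
  end.

(* chDiag p (p >= 1) = paper's diag(hat T_{f_p}, T_{theta_p}) *)
Definition chDiag (k : nat) : 'M[R]_(chdim k) :=
  match k return 'M[R]_(chdim k) with
  | 0 => 0
  | k'.+1 => block_mx (chT k') 0 0 (Ttheta k')
  end.

End Chain.

(* Main.v *)
Require Import Defs.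
From HB Require Import structures.
From mathcomp Require Import all_boot all_order all_algebra.
Import Order.TTheory GRing.Theory Num.Theory.
Local Open Scope ring_scope.

Section S.
Variable R : realFieldType.
Set Implicit Arguments. Unset Strict Implicit.

Definition qf n (M : 'M[R]_n) (x : 'cV[R]_n) := (x^T *m M *m x) 0 0.

Lemma qfD n (M N : 'M[R]_n) x : qf (M + N) x = qf M x + qf N x.
Proof. by rewrite /qf mulmxDr mulmxDl mxE. Qed.

Lemma qf_sand n m (Z : 'M[R]_(n,m)) E x : qf (Z *m E *m Z^T) x = qf E (Z^T *m x).
Proof. by rewrite /qf trmx_mul trmxK !mulmxA. Qed.

Lemma qf_block n m (N : 'M[R]_n) (u : 'cV_n) (y : 'cV_m) :
  qf (block_mx N 0 0 (0 : 'M_m)) (col_mx u y) = qf N u.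
Proof.
by rewrite /qf tr_col_mx mul_row_block !mulmx0 !addr0 mul_row_col mul0mx addr0.
Qed.

Lemma pd_unit n (E : 'M[R]_n) : pdmx E -> E \in unitmx.
Proof.
move=> [sE pE]; rewrite unitmxE unitfE; apply/negP => /det0P [v v0 vE].
have h : v^T != 0 by rewrite -(inj_eq (@trmx_inj _ _ _)) trmxK trmx0.
by have := pE _ h; rewrite trmxK vE mul0mx mxE ltxx.
Qed.

Lemma pd_ge0 n (E : 'M[R]_n) v : pdmx E -> 0 <= qf E v.
Proof.
move=> [_ pE]; have [->|v0] := eqVneq v 0.
  by rewrite /qf mulmx0 mxE.
by apply/ltW/pE.
Qed.

Lemma step (n m k : nat) (C : 'M[R]_(n,k)) (A : 'M_(m,k)) (S T : 'M_n)
  (P E : 'M_m) (s : R) :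
  pdmx E -> (C *m C^T + s *: S + T)^T = C *m C^T + s *: S + T ->
  let M := col_mx C A *m (col_mx C A)^T + s *: block_mx S 0 0 P
     + block_mx (T + C *m A^T *m invmx E *m A *m C^T) 0 0 (E - s *: P - A *m A^T) in
  M^T = M /\ (pdmx M <-> pdmx (C *m C^T + s *: S + T)).
Proof.
move=> pE sN M.
set N := C *m C^T + s *: S + T.
have uE := pd_unit pE.
have sE : E^T = E by case: pE.
set Z := col_mx (C *m A^T *m invmx E) (1%:M : 'M_m).
have eM : M = block_mx N 0 0 0 + Z *m E *m Z^T.
  rewrite /M /Z !tr_col_mx mul_col_mx mul_col_row !trmx_mul trmx_inv sE !trmxK trmx1.
  rewrite mulmxKV // mul1mx mulmx1 mul_col_row scale_block_mx !add_block_mx !scaler0 !addr0 !add0r.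
  rewrite /N mulmx1 mulKVmx // !mulmxA addrA; congr block_mx.
  by rewrite addrC addrA subrK subrK.
have sM : M^T = M.
  rewrite eM linearD /= tr_block_mx sN !trmx0 !trmx_mul trmxK sE mulmxA; done.
split=> //; split=> [[_ pM]|[_ pN]]; split=> //.
  move=> u u0.
  have x0 : col_mx u (- ((C *m A^T *m invmx E)^T *m u)) != 0.
    by apply: contra u0; rewrite -col_mx0 => /eqP/eq_col_mx [-> _].
  have := pM _ x0; rewrite -/(qf M _) eM qfD qf_sand qf_block.
  rewrite /Z tr_col_mx trmx1 mul_row_col mul1mx addrN {2}/qf mulmx0 mxE addr0; exact.
move=> x x0; rewrite -/(qf M _) eM qfD qf_sand -(vsubmxK x) qf_block.
rewrite /Z tr_col_mx trmx1 mul_row_col mul1mx.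
have [u0|u0] := eqVneq (usubmx x) 0.
  rewrite u0 mulmx0 add0r {1}/qf trmx0 !mul0mx mxE add0r.
  apply: pE.2; apply: contra x0 => /eqP d0; apply/eqP.
  by rewrite -(vsubmxK x) u0 d0 col_mx0.
apply: ltr_wpDr; first exact: pd_ge0.
exact: pN.
Qed.

Definition Tb nx nu (ny : nat -> nat) F A P E (sigma : R) Tf k :=
  match k return 'M[R]_(chdim nu ny k) with
  | 0 => Tf | k'.+1 => @chDiag R nx nu ny F A P E sigma Tf k'.+1 end.

Lemma chT_eq nx nu (ny : nat -> nat) F A P E (sigma : R) Tf k :
  @chT R nx nu ny F A P E sigma Tf k = Tb F A P E sigma Tf k
     + chF F A k *m (A k)^T *m invmx (E k) *m A k *m (chF F A k)^T.
Proof. by case: k. Qed.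

Lemma chain_main (nx nu : nat) (ny : nat -> nat) (F : 'M[R]_(nu, nx))
  (A : forall i, 'M[R]_(ny i, nx)) (P E : forall i, 'M[R]_(ny i)) sigma Sf Tf p :
  (0 < p)%N -> Sf^T = Sf -> Tf^T = Tf -> (forall i, (i < p)%N -> pdmx (E i)) ->
  (pdmx (chF F A p *m (chF F A p)^T + sigma^-1 *: chSig P Sf p
           + chDiag F A P E sigma Tf p)
   <-> pdmx (F *m F^T + sigma^-1 *: Sf + Tf)).
Proof.
move=> p0 sS sT pE.
pose Nk k := chF F A k *m (chF F A k)^T + sigma^-1 *: chSig P Sf k + Tb F A P E sigma Tf k.
have H : forall k, (k <= p)%N -> (Nk k)^T = Nk k /\ (pdmx (Nk k) <-> pdmx (Nk 0%N)).
  elim=> [|k IH] kp.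
    split=> //; rewrite /Nk /= !linearD /= linearZ /= sS sT trmx_mul trmxK //.
  have [IH1 IH2] := IH (ltnW kp).
  have := @step _ _ _ (chF F A k) (A k) (chSig P Sf k) (Tb F A P E sigma Tf k) (P k) (E k)
     sigma^-1 (pE _ kp) IH1.
  rewrite -chT_eq => -[h1 h2]; split; first exact: h1.
  exact: iff_trans h2 IH2.
have [_ h] := H p (leqnn p).
by move: h; case: (p) p0.
Qed.
End S.

Theorem proposition3p3 (R : realFieldType) (p q : nat)
  (nx nu nv : nat) (ny nz : nat -> nat)
  (F : 'M[R]_(nu, nx)) (G : 'M[R]_(nv, nx))
  (A : forall i, 'M[R]_(ny i, nx)) (B : forall j, 'M[R]_(nz j, nx))
  (sigma : R)
  (P Eth : forall i, 'M[R]_(ny i)) (Q Eph : forall j, 'M[R]_(nz j))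
  (Sf Tf : 'M[R]_nu) (Sg Tg : 'M[R]_nv) :
  (0 < p)%N -> (0 < q)%N -> 0 < sigma ->
  (forall i, (i < p)%N -> psdmx (P i)) ->
  (forall j, (j < q)%N -> psdmx (Q j)) ->
  psdmx Sf -> psdmx Sg -> psdmx Tf -> psdmx Tg ->
  (forall i, (i < p)%N -> pdmx (Eth i)) ->
  (forall i, (i < p)%N -> psdmx (Ttheta A P Eth sigma i)) ->
  (forall j, (j < q)%N -> pdmx (Eph j)) ->
  (forall j, (j < q)%N -> psdmx (Ttheta B Q Eph sigma j)) ->
  (pdmx (chF F A p *m (chF F A p)^T + sigma^-1 *: chSig P Sf p
           + chDiag F A P Eth sigma Tf p)
   <-> pdmx (F *m F^T + sigma^-1 *: Sf + Tf))
  /\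
  (pdmx (chF G B q *m (chF G B q)^T + sigma^-1 *: chSig Q Sg q
           + chDiag G B Q Eph sigma Tg q)
   <-> pdmx (G *m G^T + sigma^-1 *: Sg + Tg)).
Proof.
move=> p0 q0 _ _ _ [sSf _] [sSg _] [sTf _] [sTg _] pE _ pE' _.
by split; apply: chain_main.
Qed.
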